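(* Let $\mathcal{T}\subset\mathbb{R}$ be a compact interval of positive length $|\mathcal{T}|$, let $y_1,\dots,y_n$ and $g$ be continuous real functions on $\mathcal{T}$, and let $\alpha\in[1/(l+1),1)$. Define $k$, $\mathcal{H}_2$ and $M$ as in the context, and assume $M(t)>0$ for all $t\in\mathcal{T}$. Let $$\bar s^c(t):=\frac{M(t)}{\int_{\mathcal{T}}M(u)\,du},\qquad s^0(t):=\frac{1}{|\mathcal{T}|}.$$ Then $\mathcal{Q}(s^0)\ge\mathcal{Q}(\bar s^c)$. Moreover, $\mathcal{Q}(s^0)=\mathcal{Q}(\bar s^c)$ if and only if $M$ is constant almost everywhere on $\mathcal{T}$.
   Context: $\{1,\dots,n\}$ is partitioned into $\mathcal{I}_1$ with $|\mathcal{I}_1|=m\ge1$ and $\mathcal{I}_2$ with $|\mathcal{I}_2|=l\ge1$. Put $r:=\lceil (l+1)(1-\alpha)\rceil$. Let $k$ be the $r$-th smallest value of the multiset $\{\sup_{t\in\mathcal{T}}|y_h(t)-g(t)|:h\in\mathcal{I}_2\}$. Define $$\mathcal{H}_2:=\{j\in\mathcal{I}_2:\sup_{t\in\mathcal{T}}|y_j(t)-g(t)|\le k\},\qquad M(t):=\max_{j\in\mathcal{H}_2}|y_j(t)-g(t)|.$$ For a bounded function $u:\mathcal{T}\to(0,\infty)$, define the scores $R^u_h:=\sup_{t\in\mathcal{T}}|y_h(t)-g(t)|/u(t)$ for $h\in\mathcal{I}_2$. Let $k^u$ be the $r$-th smallest value of $\{R^u_h:h\in\mathcal{I}_2\}$.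 The size of the band is $\mathcal{Q}(u):=\int_{\mathcal{T}}2k^u u(t)\,dt$; this equals $2k^u$ when $\int_{\mathcal{T}}u=1$. *)

(* Defs.v *)
From HB Require Import structures.
From mathcomp Require Import all_boot all_order all_algebra.
From mathcomp Require Import all_classical all_reals all_analysis.
Set Implicit Arguments. Unset Strict Implicit. Unset Printing Implicit Defensive.
Import Order.TTheory GRing.Theory Num.Theory.
Import numFieldNormedType.Exports.
Local Open Scope classical_set_scope.
Local Open Scope ring_scope.

Section Defs.
Variable R : realType.

(* r-th smallest value (1-indexed) of a finite multiset given as a list *)
Definition kth_smallest (s : seq R) (r : nat) : R := nth 0 (sort <=%R s) r.-1.

Definition rank_r (l : nat) (alpha : R) : nat :=
  `|Num.ceil ((l%:R + 1) * (1 - alpha))|%N.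

Variables (n : nat) (I2 : {set 'I_n}) (a b alpha : R)
  (y : 'I_n -> R -> R) (g : R -> R).

Definition score (u : R -> R) (h : 'I_n) : R :=
  sup [set `|y h t - g t| / u t | t in `[a, b]%classic].

Definition score0 (h : 'I_n) : R :=
  sup [set `|y h t - g t| | t in `[a, b]%classic].

Definition k_u (u : R -> R) : R :=
  kth_smallest [seq score u h | h <- enum I2] (rank_r #|I2| alpha).

Definition k_0 : R :=
  kth_smallest [seq score0 h | h <- enum I2] (rank_r #|I2| alpha).

Definition H2 : {set 'I_n} := [set j in I2 | score0 j <= k_0].

(* M(t) = max_{j in H2} |y_j(t) - g(t)| (values are >= 0, H2 nonempty) *)
Definition Mfun (t : R) : R := \big[Num.max/0]_(j in H2) `|y j t - g t|.

Definition Qsize (u : R -> R) : R :=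
  Rintegral (@lebesgue_measure R) `[a, b]%classic (fun t => 2 * k_u u * u t).

Definition s0 (t : R) : R := 1 / (b - a).

Definition sbar_c (t : R) : R :=
  Mfun t / Rintegral (@lebesgue_measure R) `[a, b]%classic Mfun.

End Defs.

(* Main.v *)
Require Import Defs.
From HB Require Import structures.
From mathcomp Require Import all_boot all_order all_algebra.
From mathcomp Require Import all_classical all_reals all_analysis.
From mathcomp Require Import ring lra.
Import Order.TTheory GRing.Theory Num.Theory.
Import numFieldNormedType.Exports.
Local Open Scope classical_set_scope.
Local Open Scope ring_scope.

Section Aux.
Variable R : realType.

Lemma kth_count (s : seq R) (r : nat) : (0 < r)%N -> (r <= size s)%N ->
  (r <= count (fun x : R => (x <= kth_smallest s r)%R) s)%N.
Proof.
move=> r0 rs; rewrite /kth_smallest.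
set t := sort <=%R s.
have st : sorted <=%R t by apply: sort_sorted => x y; exact: le_total.
have sz : size t = size s by rewrite size_sort.
have -> : count (fun x : R => (x <= nth 0 t r.-1)%R) s = count (fun x : R => (x <= nth 0 t r.-1)%R) t.
  by apply/esym/permP; rewrite perm_sort.
set v := nth 0 t r.-1.
rewrite -(cat_take_drop r t) count_cat.
rewrite (_ : count _ (take r t) = size (take r t)); last first.
  apply/eqP; rewrite -all_count; apply/(all_nthP 0) => i.
  rewrite size_takel ?sz // => ir; rewrite nth_take //.
  rewrite /v; apply: (le_sorted_leq_nth 0 st); rewrite ?inE ?sz.
  - by apply: leq_trans ir rs.
  - by rewrite prednK // ltnS.
  - by rewrite -ltnS prednK.
by rewrite size_takel ?sz // leq_addr.
Qed.

Lemma kth_le (s : seq R) (r : nat) (c : R) : (0 < r)%N -> (r <= size s)%N ->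
  (r <= count (fun x : R => (x <= c)%R) s)%N -> kth_smallest s r <= c.
Proof.
move=> r0 rs rc; rewrite /kth_smallest.
set t := sort <=%R s.
have st : sorted <=%R t by apply: sort_sorted => x y; exact: le_total.
have sz : size t = size s by rewrite size_sort.
rewrite leNgt; apply/negP => cv.
have : (count (fun x : R => (x <= c)%R) t <= r.-1)%N.
  rewrite -(cat_take_drop r.-1 t) count_cat.
  have -> : count (fun x : R => (x <= c)%R) (drop r.-1 t) = 0%N.
    apply/eqP; rewrite -leqn0 leqNgt -has_count; apply/hasPn => x.
    move=> /(nthP 0) [i]; rewrite size_drop => ii <-.
    rewrite nth_drop -ltNge; apply: (lt_le_trans cv).
    apply: le_sorted_leq_nth => //; rewrite ?inE.
    - by rewrite sz -ltnS prednK.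
    - by rewrite -ltn_subRL.
    - by rewrite leq_addr.
  by rewrite addn0 (leq_trans (count_size _ _)) // size_take; case: ifP => // /negbT; rewrite -leqNgt.
have -> : count (fun x : R => (x <= c)%R) t = count (fun x : R => (x <= c)%R) s.
  by apply/permP; rewrite perm_sort.
move=> h; move: (leq_trans rc h); rewrite -ltnS prednK // ltnn //.
Qed.

Lemma kth_scale (s : seq R) (r : nat) (c : R) : 0 < c -> (0 < r)%N -> (r <= size s)%N ->
  kth_smallest [seq c * x | x <- s] r = c * kth_smallest s r.
Proof.
move=> c0 r0 rs; rewrite /kth_smallest.
have mono : {mono (fun x => c * x) : x y / x <= y >-> x <= y}.
  by move=> x y /=; rewrite ler_pM2l.
rewrite -(map_sort mono) (nth_map 0) // size_sort.
by rewrite -ltnS prednK // ltnS.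
Qed.

End Aux.

Section Aux2.
Variable R : realType.

Lemma sup_scale (D : set R) (f1 f2 : R -> R) (c : R) : 0 < c -> D !=set0 ->
  has_ubound (f1 @` D) -> (forall t, D t -> f2 t = c * f1 t) ->
  sup (f2 @` D) = c * sup (f1 @` D).
Proof.
move=> c0 [t0 Dt0] [B hB] e.
have ub1 : ubound (f1 @` D) (sup (f1 @` D)) by apply: ub_le_sup; exists B.
have hB2 : has_ubound (f2 @` D).
  exists (c * B) => _ [t Dt <-]; rewrite e // ler_pM2l //; apply: hB; by exists t.
have ub2 : ubound (f2 @` D) (sup (f2 @` D)) by apply: ub_le_sup.
apply/le_anti/andP; split.
- apply: ge_sup; first by exists (f2 t0), t0.
  move=> _ [t Dt <-]; rewrite e // ler_pM2l //; apply: ub1; by exists t.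
- rewrite -ler_pdivlMl //; apply: ge_sup; first by exists (f1 t0), t0.
  move=> _ [t Dt <-]; rewrite ler_pdivlMl // -e //; apply: ub2; by exists t.
Qed.

Lemma ae_itv_false (c d : R) (P : R -> Prop) : c < d ->
  {ae (@lebesgue_measure R), forall t, P t} ->
  (forall t, t \in `[c, d] -> ~ P t) -> False.
Proof.
move=> cd [N [mN N0 sub]] h.
have : (lebesgue_measure (`[c, d]%classic : set R) <= lebesgue_measure N)%E.
  apply: le_measure; rewrite ?inE //.
  move=> t ct; apply: sub => /= Pt; exact: (h t ct Pt).
rewrite N0 lebesgue_measure_itv /= lte_fin cd lee_fin subr_le0 leNgt cd //.
Qed.

Lemma cont_ae_const (a b c : R) (f : R -> R) : a < b ->
  {within `[a, b], continuous f} ->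
  {ae (@lebesgue_measure R), forall t, `[a, b]%classic t -> f t = c} ->
  forall t, `[a, b]%classic t -> f t = c.
Proof.
move=> ab cf ae t0 Dt0; apply/eqP/negPn/negP => ne.
have e0 : 0 < `|f t0 - c| by rewrite normr_gt0 subr_eq0.
move/subspace_continuousP: cf => /(_ t0 Dt0) /cvgrPdist_lt /(_ _ e0).
rewrite near_withinE => /nbhs_ballP [del /= del0 hb].
have := Dt0; rewrite /= in_itv /= => /andP [at0 t0b].
have d2 : 0 < del / 2 by rewrite divr_gt0.
apply: (@ae_itv_false (Num.max a (t0 - del/2)) (Num.min b (t0 + del/2)) _ _ ae).
  rewrite lt_min !gt_max; apply/andP; split; apply/andP; split; lra.
move=> t; rewrite in_itv /= ge_max le_min => /andP [/andP [aT tl] /andP [tb tu]] H.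
have Dt : `[a, b]%classic t by rewrite /= in_itv /= aT tb.
have : ball t0 del t.
  rewrite /ball /= ltr_norml; apply/andP; split; lra.
move=> /hb /(_ Dt); rewrite /from_subspace /= H // ltxx //.
Qed.

Lemma int0_ae (a b : R) (f : R -> R) :
  (@lebesgue_measure R).-integrable `[a, b]%classic (EFin \o f) ->
  (forall t, `[a, b]%classic t -> 0 <= f t) ->
  Rintegral (@lebesgue_measure R) `[a, b]%classic f = 0 ->
  {ae (@lebesgue_measure R), forall t, `[a, b]%classic t -> f t = 0}.
Proof.
move=> fi f0 I0.
have mD : measurable (`[a, b]%classic : set R) by exact: measurable_itv.
have /integrableP [mf _] := fi.
have fin : (\int[@lebesgue_measure R]_(x in `[a, b]%classic) (EFin \o f) x)%E \is a fin_num by apply: integrable_fin_num fi.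
have : (\int[@lebesgue_measure R]_(x in `[a, b]%classic) `|(EFin \o f) x|)%E = 0.
  transitivity (\int[@lebesgue_measure R]_(x in `[a, b]%classic) (EFin \o f) x)%E.
    by apply: eq_integral => x; rewrite inE => Dx; rewrite gee0_abs // lee_fin f0.
  by move: I0; rewrite /Rintegral => I0; rewrite -(fineK fin) I0.
move=> H0; have H := (ae_eq_integral_abs _ _ mf).1 H0.
have H1 : {ae (@lebesgue_measure R), forall x, `[a, b]%classic x -> (EFin \o f) x = cst 0%E x}.
  by apply: H.
move: H1 => [N [mN N0 sub]].
exists N; split; [exact: mN | exact: N0 |].
move=> x /= nx; apply: sub => /= h.
by apply: nx => Dx; have := h Dx; move/(congr1 fine).
Qed.

End Aux2.

Lemma rank_facts (R : realType) (l : nat) (alpha : R) : (0 < l)%N ->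
  1 / (l%:R + 1) <= alpha -> alpha < 1 ->
  (0 < rank_r l alpha)%N /\ (rank_r l alpha <= l)%N.
Proof.
move=> l0 al a1; rewrite /rank_r.
have L0 : 0 < l%:R + 1 :> R by rewrite ltr_wpDl.
have h1 : 1 <= (l%:R + 1) * alpha by move: al; rewrite ler_pdivrMr // mulrC.
have xpos : 0 < (l%:R + 1) * (1 - alpha) by rewrite mulr_gt0 // subr_gt0.
have xle : (l%:R + 1) * (1 - alpha) <= l%:R by lra.
have c1 := ceil_ge ((l%:R + 1) * (1 - alpha)).
have c2 : Num.ceil ((l%:R + 1) * (1 - alpha)) <= l%:Z by rewrite ceil_le_int.
move: c1 c2; case: (Num.ceil _) => m.
  move=> c1 c2; split; last by rewrite /= -lez_nat.
  rewrite /= lt0n; apply/eqP => m0; move: c1; rewrite m0 /= => c1; lra.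
by move=> c1; have := lt_le_trans xpos c1; rewrite ltr0z.
Qed.

Theorem theorem3 (R : realType) (n : nat) (I1 I2 : {set 'I_n})
  (a b alpha : R) (y : 'I_n -> R -> R) (g : R -> R) :
  (forall i : 'I_n, ~~ ((i \in I1) && (i \in I2))) -> (forall i : 'I_n, (i \in I1) || (i \in I2)) ->
  (0 < #|I1|)%N -> (0 < #|I2|)%N ->
  a < b ->
  (forall i, {within `[a, b]%classic, continuous (y i)}) ->
  {within `[a, b]%classic, continuous g} ->
  1 / (#|I2|%:R + 1) <= alpha -> alpha < 1 ->
  (forall t, t \in `[a, b] -> 0 < Mfun I2 a b alpha y g t) ->
  Qsize I2 a b alpha y g (sbar_c I2 a b alpha y g) <= Qsize I2 a b alpha y g (s0 a b) /\
  (Qsize I2 a b alpha y g (s0 a b) = Qsize I2 a b alpha y g (sbar_c I2 a b alpha y g) <->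
   exists c : R, {ae (@lebesgue_measure R),
     forall t, `[a, b]%classic t -> Mfun I2 a b alpha y g t = c}).
Proof.
move=> _ _ _ l0 ab cy cg al a1 Mpos.
have [r0 rl] := @rank_facts R _ alpha l0 al a1.
set r := rank_r #|I2| alpha in r0 rl.
set D := `[a, b]%classic : set R.
have mD : measurable D by exact: measurable_itv.
have Da : D a by rewrite /D /= in_itv /= lexx ltW.
have Dne : D !=set0 by exists a.
pose fh h t := `|y h t - g t|.
have cf : forall h, {within D, continuous (fh h)}.
  move=> h; apply: (@within_continuous_comp _ _ _ D (y h - g) Num.norm).
    by move=> x _; exact: norm_continuous.
  exact: within_continuousB.
have hub : forall h, has_ubound (fh h @` D).
  move=> h; have [c _ hc] := EVT_max (ltW ab) (cf h).
  by exists (fh h c) => _ [t Dt <-]; apply: hc.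
pose s0f := score0 a b y g.
have sc0 : forall h t, D t -> fh h t <= s0f h.
  move=> h t Dt; apply: (ub_le_sup (hub h)); by exists t.
have sc0ge : forall h, 0 <= s0f h.
  by move=> h; exact: le_trans (normr_ge0 _) (sc0 h a Da).
pose k0 := k_0 I2 a b alpha y g.
pose L0 := [seq s0f h | h <- enum I2].
have szL0 : size L0 = #|I2| by rewrite size_map cardE.
have k0E : k0 = kth_smallest L0 r by [].
have k0ge : 0 <= k0.
  rewrite k0E /kth_smallest.
  have : nth 0 (sort <=%R L0) r.-1 \in L0.
    rewrite -(mem_sort <=%R); apply: mem_nth; rewrite size_sort szL0.
    by rewrite -ltnS prednK.
  by move=> /mapP [h _ ->].
pose M := Mfun I2 a b alpha y g.
have Mle : forall t, D t -> M t <= k0.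
  move=> t Dt; apply: bigmax_le => // j; rewrite inE => /andP [_ hj].
  exact: le_trans (sc0 j t Dt) hj.
have cM : {within D, continuous M}.
  have gen : forall (s : seq 'I_n) (P : pred 'I_n),
      {within D, continuous (fun t => \big[Num.max/0]_(j <- s | P j) fh j t)}.
    move=> s P; elim: s => [|j s IH].
      rewrite (_ : (fun t => _) = cst 0); last by apply/funext => t; rewrite big_nil.
      by move=> x; apply: cvg_cst.
    case Pj : (P j).
      rewrite (_ : (fun t => _) = (fh j \max (fun t => \big[Num.max/0]_(i <- s | P i) fh i t))); last first.
        by apply/funext => t; rewrite big_cons Pj.
      by move=> x; apply: continuous_max; [exact: cf | exact: IH].
    rewrite (_ : (fun t => _) = (fun t => \big[Num.max/0]_(i <- s | P i) fh i t)) //.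
    by apply/funext => t; rewrite big_cons Pj.
  exact: gen.
have iM : (@lebesgue_measure R).-integrable D (EFin \o M).
  apply: continuous_compact_integrable; [exact: segment_compact | exact: cM].
have icst : forall c : R, (@lebesgue_measure R).-integrable D (EFin \o cst c).
  move=> c; apply: continuous_compact_integrable; [exact: segment_compact|].
  by move=> x; apply: cvg_cst.
have muD : fine (@lebesgue_measure R D) = b - a.
  by rewrite /D lebesgue_measure_itv /= lte_fin ab.
have Mpos' : forall t, D t -> 0 < M t by move=> t Dt; apply: Mpos.
pose IM := \int[@lebesgue_measure R]_(x in D) M x.
have IMle : IM <= (b - a) * k0.
  have -> : (b - a) * k0 = \int[@lebesgue_measure R]_(x in D) cst k0 x.
    by rewrite Rintegral_cst // muD mulrC.
  by apply: le_Rintegral => //; apply: icst.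
have IMpos : 0 < IM.
  rewrite lt0r Rintegral_ge0 ?andbT; last by move=> t Dt; apply/ltW/Mpos'.
  apply/eqP => IM0.
  have ae0 := @int0_ae R a b M iM (fun t Dt => ltW (Mpos' t Dt)) IM0.
  apply: (@ae_itv_false _ a b _ ab ae0) => t Dt H.
  by have := Mpos' t Dt; rewrite H // ltxx.
have IMne : IM != 0 by rewrite gt_eqF.
have ba0 : 0 < b - a by rewrite subr_gt0.
have sc_s0 : forall h, score a b y g (s0 a b) h = (b - a) * s0f h.
  move=> h; rewrite /score /s0f /score0; apply: sup_scale => //.
    exact: (hub h).
  move=> t Dt; by rewrite /s0 div1r invrK mulrC.
have ks0 : k_u I2 a b alpha y g (s0 a b) = (b - a) * k0.
  rewrite /k_u (eq_map sc_s0) (map_comp (fun x => (b - a) * x) s0f).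
  by rewrite kth_scale // size_map -cardE.
have Qs0 : Qsize I2 a b alpha y g (s0 a b) = 2 * (b - a) * k0.
  rewrite /Qsize ks0 /s0 /= Rintegral_cst // muD; field; exact: lt0r_neq0.
pose sb := sbar_c I2 a b alpha y g.
pose ksb := k_u I2 a b alpha y g sb.
have sbE : forall t, sb t = M t / IM by [].
have Qsb : Qsize I2 a b alpha y g sb = 2 * ksb.
  rewrite /Qsize -/ksb.
  transitivity (\int[@lebesgue_measure R]_(x in D) ((2 * ksb / IM) * M x)).
    by apply: eq_Rintegral => x _; rewrite sbE mulrA mulrAC.
  by rewrite RintegralZl // -mulrA mulVf // mulr1.
have ksb_le : ksb <= IM.
  apply: kth_le => //; first by rewrite size_map -cardE.
  have := @kth_count R L0 r r0 (leq_trans rl (eq_leq (esym szL0))).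
  rewrite -k0E => /leq_trans; apply.
  rewrite !count_map.
  rewrite (@eq_in_count _ _ (fun h => (h \in I2) && (s0f h <= k0))); last first.
    by move=> h; rewrite mem_enum => -> .
  apply: sub_count => h /andP [hI hk] /=.
  have hH : h \in H2 I2 a b alpha y g by rewrite inE hI.
  rewrite /score; apply: ge_sup; first by exists (fh h a / sb a), a.
  move=> _ [t Dt <-]; rewrite sbE.
  have Mt := Mpos' t Dt.
  have fM : fh h t <= M t by rewrite /M /Mfun; exact: (le_bigmax_cond _ _ hH).
  rewrite invf_div mulrA ler_pdivrMr // mulrC.
  by rewrite ler_wpM2l // ltW.
split.
  rewrite Qsb Qs0 -mulrA ler_pM2l //; exact: le_trans ksb_le IMle.
split.
  rewrite Qsb Qs0 => eqQ.
  have IMeq : IM = (b - a) * k0.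
    apply/le_anti; rewrite IMle /=.
    have : (b - a) * k0 = ksb by apply: (mulfI (x:=2)) => //; rewrite mulrA.
    by move=> ->.
  have cK : {within D, continuous (fun x => k0 - M x)}.
    by apply: within_continuousB => // x; apply: cvg_cst.
  have iK : (@lebesgue_measure R).-integrable D (EFin \o (fun x => k0 - M x)).
    apply: continuous_compact_integrable; [exact: segment_compact | exact: cK].
  have I0 : \int[@lebesgue_measure R]_(x in D) (k0 - M x) = 0.
    have -> : \int[@lebesgue_measure R]_(x in D) (k0 - M x) =
      \int[@lebesgue_measure R]_(x in D) (cst k0 x - M x) by [].
    rewrite RintegralB //.
    rewrite Rintegral_cst // muD -/IM IMeq; ring.
  have K0 : forall t, D t -> 0 <= k0 - M t by move=> t Dt; rewrite subr_ge0 Mle.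
  have ae0 := @int0_ae R a b (fun x => k0 - M x) iK K0 I0.
  exists k0; move: ae0 => [N [mN N0 sub]]; exists N; split => //.
  move=> x /= nx; apply: sub => /= h; apply: nx => Dx.
  by have /eqP := h Dx; rewrite subr_eq0 => /eqP ->.
move=> [c aec].
have Mc := @cont_ae_const R a b c M ab cM aec.
have c0 : 0 < c by rewrite -(Mc a Da); exact: Mpos'.
have IMc : IM = c * (b - a).
  rewrite /IM (eq_Rintegral _ (g := cst c)); last by move=> x; rewrite inE => Dx; exact: Mc.
  by rewrite Rintegral_cst // muD.
have sbs0 : forall t, D t -> sb t = s0 a b t.
  move=> t Dt; rewrite sbE Mc // IMc /s0; field.
  by rewrite lt0r_neq0 // lt0r_neq0.
have scE : forall h, score a b y g sb h = score a b y g (s0 a b) h.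
  move=> h; rewrite /score; congr sup; apply: eq_imagel => t Dt; by rewrite sbs0.
have kE : ksb = k_u I2 a b alpha y g (s0 a b) by rewrite /ksb /k_u (eq_map scE).
rewrite /Qsize -/ksb kE; apply: eq_Rintegral => x; rewrite inE => Dx.
by rewrite -(sbs0 x Dx).
Qed.
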